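(* Let $t$ be a closed term and $\pi\triangleright\ \vdash^{(m,e)} t:\mathtt{n}$ a derivation (with empty type context) in the silly multi type system. Then there is a $\to_w$-normal term $n$ and a reduction sequence $d: t\to_y^* n$ such that the number of $\to_{ym}$ steps in $d$ is exactly $m$ and the number of $\to_{yeAY}$ and $\to_{yeYN}$ steps in $d$ is exactly $e$.
   Context: Terms: $t ::= x \mid \lambda x.t \mid t\,u \mid t[x\backslash u]$ ($t[x\backslash u]$ an explicit substitution binding $x$ in $t$; terms up to $\alpha$). Values $v ::= \lambda x.t$. Substitution contexts $S ::= \langle\cdot\rangle\mid S[x\backslash u]$. Weak contexts $W ::= \langle\cdot\rangle \mid W\,t \mid t\,W \mid t[x\backslash W] \mid W[x\backslash u]$. For a class of contexts $K$, $K\langle\langle t\rangle\rangle$ is plugging without capture of free variables of $t$. Root rules: $S\langle\lambda x.t\rangle u\mapsto_m S\langle t[x\backslash u]\rangle$; $K\langle\langle x\rangle\rangle[x\backslash u]\mapsto_{e_K} K\langle\langle u\rangle\rangle[x\backslash u]$; $t[x\backslash S\langle v\rangle]\mapsto_{gcv} S\langle t\rangle$ if $x\notin\mathrm{fv}(t)$. $\to_w$ is the union of the closures under weak contexts of $\mapsto_m$, $\mapsto_{e_W}$ ($K$ = weak contexts), $\mapsto_{gcv}$. Call-by-silly strategy: answers $a ::= v\mid a[x\backslash a']$; name contexts $N ::= \langle\cdot\rangle\mid N t\mid N[x\backslash t]$; auxiliary contexts $A ::= \langle\cdot\rangle\mid a[x\backslash A]\mid A[x\backslash t]$; silly contexts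 $Y ::= A\langle N\rangle$; $\to_{ym} := Y\langle\mapsto_m\rangle$; $\to_{yeAY} := A\langle\mapsto_{e_Y}\rangle$; $\to_{yeYN} := Y\langle\mapsto_{e_N}\rangle$; $\to_{ygcv}:=Y\langle\mapsto_{gcv}\rangle$; $\to_y$ is their union. Silly multi types: linear types $L ::= \mathtt{n} \mid M\multimap L$; multi types $M ::= [L_i]_{i\in I}$ finite multisets ($\mathbf{0}$ empty, $\uplus$ sum). Type contexts $\Gamma$ map variables to multi types with finite support; $\uplus$ pointwise; $\Gamma\setminus\!\!\setminus x$ sets $x$ to $\mathbf{0}$. Rules: (ax) $x:[L]\vdash^{(0,1)} x:L$; (many) from $(\Gamma_i\vdash^{(m_i,e_i)} t : L_i)_{i\in I}$, $I$ finite possibly empty, infer $\uplus_i\Gamma_i\vdash^{(\sum m_i,\sum e_i)} t : [L_i]_{i\in I}$; ($\mathrm{ax}_\lambda$) $\vdash^{(0,0)}\lambda x.t:\mathtt{n}$; ($\lambda$) from $\Gamma\vdash^{(m,e)}t:L$ infer $\Gamma\setminus\!\!\setminus x\vdash^{(m,e)}\lambda x.t:\Gamma(x)\multimap L$; (@) from $\Gamma\vdash^{(m,e)} t : M\multimap L$ and $\Delta\vdash^{(m',e')} u : M\uplus[\mathtt{n}]$ infer $\Gamma\uplus\Delta\vdash^{(m+m'+1,e+e')} tu : L$; (ES) from $\Gamma\vdash^{(m,e)} t:L$ and $\Delta\vdash^{(m',e')}u:\Gamma(x)\uplus[\mathtt{n}]$ infer $(\Gamma\setminus\!\!\setminus x)\uplus\Delta\vdash^{(m+m',e+e')}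 t[x\backslash u]:L$. *)

(* Defs.v *)
From mathcomp Require Import all_boot.
Set Implicit Arguments. Unset Strict Implicit. Unset Printing Implicit Defensive.

(* ES t u  represents  t[x\u] ; the index 0 in t is bound by the ES. *)
Inductive term : Type :=
| Var of nat
| Lam of term
| App of term & term
| ES of term & term.

Definition upren (f : nat -> nat) : nat -> nat :=
  fun n => if n is k.+1 then (f k).+1 else 0.

Fixpoint ren (f : nat -> nat) (t : term) : term :=
  match t with
  | Var n => Var (f n)
  | Lam b => Lam (ren (upren f) b)
  | App t u => App (ren f t) (ren f u)
  | ES t u => ES (ren (upren f) t) (ren f u)
  end.

Definition lift (k : nat) (t : term) : term := ren (fun j => k + j) t.

Fixpoint occurs (i : nat) (t : term) : bool :=
  match t with
  | Var n => n == i
  | Lam b => occurs i.+1 b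
  | App t u => occurs i t || occurs i u
  | ES t u => occurs i.+1 t || occurs i u
  end.

Definition closed_term (t : term) : Prop := forall i, ~~ occurs i t.

Definition value (t : term) : Prop := exists b, t = Lam b.

Inductive ctx : Type :=
| Hole
| CAppL of ctx & term
| CAppR of term & ctx
| CESL of ctx & term       (* C[x\u] : hole under the ES binder *)
| CESR of term & ctx.

Fixpoint plug (C : ctx) (s : term) : term :=
  match C with
  | Hole => s
  | CAppL C t => App (plug C s) t
  | CAppR t C => App t (plug C s)
  | CESL C u => ES (plug C s) u
  | CESR t C => ES t (plug C s)
  end.

Fixpoint depth (C : ctx) : nat :=
  match C with
  | Hole => 0
  | CAppL C _ => depth C
  | CAppR _ C => depth C
  | CESL C _ => (depth C).+1
  | CESR _ C => depth C
  end.

Fixpoint cplug (C D : ctx) : ctx :=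
  match C with
  | Hole => D
  | CAppL C t => CAppL (cplug C D) t
  | CAppR t C => CAppR t (cplug C D)
  | CESL C u => CESL (cplug C D) u
  | CESR t C => CESR t (cplug C D)
  end.

(* weak contexts: every ctx (W ::= <> | W t | t W | t[x\W] | W[x\u]) *)
Definition is_W (C : ctx) : Prop := True.

Inductive is_S : ctx -> Prop :=
| S_hole : is_S Hole
| S_es S u : is_S S -> is_S (CESL S u).

Inductive answer : term -> Prop :=
| ans_val b : answer (Lam b)
| ans_es a a' : answer a -> answer a' -> answer (ES a a').

Inductive is_N : ctx -> Prop :=
| N_hole : is_N Hole
| N_app N t : is_N N -> is_N (CAppL N t)
| N_es N t : is_N N -> is_N (CESL N t).

Inductive is_A : ctx -> Prop :=
| A_hole : is_A Hole
| A_ans a A : answer a -> is_A A -> is_A (CESR a A)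
| A_es A t : is_A A -> is_A (CESL A t).

Definition is_Y (C : ctx) : Prop :=
  exists A N, is_A A /\ is_N N /\ C = cplug A N.

(* S<\x.b> u  |->m  S<b[x\u]>  (u lifted past the binders of S) *)
Definition root_m (t t' : term) : Prop :=
  exists S b u, is_S S /\ t = App (plug S (Lam b)) u /\
                t' = plug S (ES b (lift (depth S) u)).

(* K<<x>>[x\u]  |->e_K  K<<u>>[x\u] *)
Definition root_e (K : ctx -> Prop) (t t' : term) : Prop :=
  exists C u, K C /\ t = ES (plug C (Var (depth C))) u /\
              t' = ES (plug C (lift (depth C).+1 u)) u.

(* b[x\S<v>]  |->gcv  S<b>  if x notin fv(b) *)
Definition root_gcv (t t' : term) : Prop :=
  exists b S v, is_S S /\ value v /\ t = ES b (plug S v) /\ ~~ occurs 0 b /\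
                t' = plug S (ren (fun j => j.-1 + depth S) b).

Definition step_w (t t' : term) : Prop :=
  exists C r r', is_W C /\ t = plug C r /\ t' = plug C r' /\
    (root_m r r' \/ root_e is_W r r' \/ root_gcv r r').

Definition w_normal (t : term) : Prop := ~ exists t', step_w t t'.

Inductive ylab : Type := YM | YeAY | YeYN | Ygcv.

Definition ystep (l : ylab) (t t' : term) : Prop :=
  exists C r r', t = plug C r /\ t' = plug C r' /\
    match l with
    | YM => is_Y C /\ root_m r r'
    | YeAY => is_A C /\ root_e is_Y r r'
    | YeYN => is_Y C /\ root_e is_N r r'
    | Ygcv => is_Y C /\ root_gcv r r'
    end.

(* reduction sequences t ->y* t' recorded as the list of step labels *)
Inductive yseq : term -> seq ylab -> term -> Prop :=
| ys_nil t : yseq t [::] t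
| ys_cons l t t1 ls t2 : ystep l t t1 -> yseq t1 ls t2 -> yseq t (l :: ls) t2.

Definition is_m_lab (l : ylab) : bool := if l is YM then true else false.
Definition is_e_lab (l : ylab) : bool :=
  match l with YeAY | YeYN => true | _ => false end.

(* multi types are finite multisets, represented as lists up to meq *)
Inductive ltype : Type :=
| TN
| TArr of seq ltype & ltype.

Inductive teq : ltype -> ltype -> Prop :=
| teq_n : teq TN TN
| teq_arr M M' L L' : meq M M' -> teq L L' -> teq (TArr M L) (TArr M' L')
with meq : seq ltype -> seq ltype -> Prop :=
| meq_nil : meq [::] [::]
| meq_skip L L' M M' : teq L L' -> meq M M' -> meq (L :: M) (L' :: M')
| meq_swap L1 L2 M : meq (L1 :: L2 :: M) (L2 :: L1 :: M)
| meq_trans M1 M2 M3 : meq M1 M2 -> meq M2 M3 -> meq M1 M3.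

Definition tctx := nat -> seq ltype.
Definition empty_ctx : tctx := fun _ => [::].
Definition cunion (G D : tctx) : tctx := fun i => G i ++ D i.
Definition single (i : nat) (L : ltype) : tctx :=
  fun j => if j == i then [:: L] else [::].

Inductive typing : tctx -> nat -> nat -> term -> ltype -> Prop :=
| ty_ax i L : typing (single i L) 0 1 (Var i) L
| ty_axlam b : typing empty_ctx 0 0 (Lam b) TN
| ty_lam G m e b L :
    typing G m e b L ->
    typing (fun i => G i.+1) m e (Lam b) (TArr (G 0) L)
| ty_app G D m e m' e' t u M M' L :
    typing G m e t (TArr M L) -> typing_m D m' e' u M' -> meq M' (TN :: M) ->
    typing (cunion G D) (m + m' + 1) (e + e') (App t u) L
| ty_es G D m e m' e' t u M' L :
    typing G m e t L -> typing_m D m' e' u M' -> meq M' (TN :: G 0) ->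
    typing (cunion (fun i => G i.+1) D) (m + m') (e + e') (ES t u) L
with typing_m : tctx -> nat -> nat -> term -> seq ltype -> Prop :=
| tym_nil t : typing_m empty_ctx 0 0 t [::]
| tym_cons G D m e m' e' t L M :
    typing G m e t L -> typing_m D m' e' t M ->
    typing_m (cunion G D) (m + m') (e + e') t (L :: M).

(* Main.v *)
Require Import Defs.
From mathcomp Require Import all_boot zify.
From Stdlib Require Import Setoid Morphisms.
Set Implicit Arguments. Unset Strict Implicit. Unset Printing Implicit Defensive.


Scheme teq_mut := Induction for teq Sort Prop
with meq_mut := Induction for meq Sort Prop.

Fixpoint teq_refl (L : ltype) : teq L L :=
  match L with
  | TN => teq_n
  | TArr M L' => teq_arr ((fix mr (M : seq ltype) : meq M M :=
        match M with [::] => meq_nil | L0 :: M0 => meq_skip (teq_refl L0) (mr M0) end) M)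
      (teq_refl L')
  end.

Lemma meq_refl M : meq M M.
Proof. elim: M => [|L M IH]; [exact: meq_nil | exact: meq_skip (teq_refl L) IH]. Qed.

Lemma teq_meq_sym : (forall L L', teq L L' -> teq L' L) /\ (forall M M', meq M M' -> meq M' M).
Proof.
apply: conj.
- refine (@teq_mut (fun L L' (_ : teq L L') => teq L' L) (fun M M' (_ : meq M M') => meq M' M) _ _ _ _ _ _).
  + exact: teq_n.
  + by move=> M M' L L' _ H1 _ H2; apply: teq_arr.
  + exact: meq_nil.
  + by move=> L L' M M' _ H1 _ H2; apply: meq_skip.
  + by move=> *; apply: meq_swap.
  + by move=> M1 M2 M3 _ H1 _ H2; apply: meq_trans H2 H1.
- refine (@meq_mut (fun L L' (_ : teq L L') => teq L' L) (fun M M' (_ : meq M M') => meq M' M) _ _ _ _ _ _).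
  + exact: teq_n.
  + by move=> M M' L L' _ H1 _ H2; apply: teq_arr.
  + exact: meq_nil.
  + by move=> L L' M M' _ H1 _ H2; apply: meq_skip.
  + by move=> *; apply: meq_swap.
  + by move=> M1 M2 M3 _ H1 _ H2; apply: meq_trans H2 H1.
Qed.
Definition teq_sym := proj1 teq_meq_sym.
Definition meq_sym := proj2 teq_meq_sym.

Lemma teq_trans L1 L2 L3 : teq L1 L2 -> teq L2 L3 -> teq L1 L3.
Proof.
move=> H; elim: H L3 => [|M M' L L' HM HL IH] L3 H3 //.
inversion H3; subst. apply: teq_arr; [exact: meq_trans HM _ | exact: IH].
Qed.

#[export] Instance meq_Equiv : Equivalence meq.
Proof. split; [exact: meq_refl | exact: meq_sym | exact: meq_trans]. Qed.

Lemma meq_catl A A' B : meq A A' -> meq (A ++ B) (A' ++ B).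
Proof.
elim => //=.
- exact: meq_refl.
- by move=> L L' M M' H _ IH; apply: meq_skip.
- by move=> *; apply: meq_swap.
- by move=> M1 M2 M3 _ H1 _ H2; apply: meq_trans H1 H2.
Qed.

Lemma meq_catr A B B' : meq B B' -> meq (A ++ B) (A ++ B').
Proof. elim: A => //= L A IH H; apply: meq_skip (teq_refl L) (IH H). Qed.

#[export] Instance cat_Proper : Proper (meq ==> meq ==> meq) (@cat ltype).
Proof. move=> A A' HA B B' HB; apply: meq_trans (meq_catl _ HA) (meq_catr _ HB). Qed.

#[export] Instance cons_Proper : Proper (eq ==> meq ==> meq) (@cons ltype).
Proof. move=> x y -> A B H; exact: meq_skip (teq_refl y) H. Qed.

Lemma meq_consC L A : meq (L :: A) (A ++ [:: L]).
Proof.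
elim: A => [|x A IH] /=; first exact: meq_refl.
apply: meq_trans (meq_swap _ _ _) _; exact: meq_skip (teq_refl x) IH.
Qed.

Lemma meq_catC A B : meq (A ++ B) (B ++ A).
Proof.
elim: A B => [|x A IH] B /=; first by rewrite cats0; apply: meq_refl.
apply: meq_trans (meq_skip (teq_refl x) (IH B)) _.
apply: meq_trans (meq_consC _ _) _. rewrite -catA /=. apply: meq_catr; apply: meq_sym; exact: meq_consC.
Qed.

Lemma meq_pull (x L R1 R2 : seq ltype) : meq L (R1 ++ R2) -> meq (x ++ L) (R1 ++ x ++ R2).
Proof.
move=> H. apply: meq_trans (meq_catr x H) _.
rewrite !catA. apply: meq_catl. exact: meq_catC.
Qed.

Lemma meq_size M M' : meq M M' -> size M = size M'.
Proof. by elim => //= *; congruence. Qed.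

Lemma meq_nil_inv M : meq [::] M -> M = [::].
Proof. by move/meq_size; case: M. Qed.

(* Solver for meq goals made of ++ of atoms *)
Ltac splitR x R :=
  lazymatch R with
  | x ++ ?R2 => constr:(([::] : seq ltype, R2))
  | x => constr:(([::] : seq ltype, [::] : seq ltype))
  | ?y ++ ?R' => let p := splitR x R' in
                 let a := eval cbv [fst] in (fst p) in
                 let b := eval cbv [snd] in (snd p) in
                 constr:((y ++ a, b))
  end.

Ltac msolve :=
  rewrite -?catA ?cats0 ?cat0s;
  lazymatch goal with
  | |- meq ?L ?L => apply: meq_refl
  | |- meq (?x ++ ?L) ?R =>
      let p := splitR x R in
      let R1 := eval cbv [fst] in (fst p) in
      let R2 := eval cbv [snd] in (snd p) in
      let E := fresh "E" in
      assert (E : R = R1 ++ x ++ R2) by (rewrite -?catA ?cats0 ?cat0s; reflexivity);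
      rewrite E; clear E; apply: meq_pull; msolve
  | |- meq ?x ?R =>
      let p := splitR x R in
      let R1 := eval cbv [fst] in (fst p) in
      let R2 := eval cbv [snd] in (snd p) in
      let E := fresh "E" in
      assert (E : R = R1 ++ x ++ R2) by (rewrite -?catA ?cats0 ?cat0s; reflexivity);
      rewrite E; clear E; rewrite -[x]cats0; apply: meq_pull; msolve
  end.



Definition ceq (G G' : tctx) := forall i, meq (G i) (G' i).
Definition shc (G : tctx) : tctx := fun i => G i.+1.
Definition unsh (d : nat) (G : tctx) : tctx := fun i => G (i + d).

Lemma ceq_refl G : ceq G G. Proof. by move=> i; apply: meq_refl. Qed.
Lemma ceq_sym G G' : ceq G G' -> ceq G' G. Proof. by move=> H i; apply: meq_sym. Qed.
Lemma ceq_trans G1 G2 G3 : ceq G1 G2 -> ceq G2 G3 -> ceq G1 G3.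
Proof. by move=> H1 H2 i; apply: meq_trans (H1 i) (H2 i). Qed.
Lemma ceq_cunion G G' D D' : ceq G G' -> ceq D D' -> ceq (cunion G D) (cunion G' D').
Proof. by move=> H1 H2 i; rewrite /cunion (H1 i) (H2 i); apply: meq_refl. Qed.
Lemma ceq_shc G G' : ceq G G' -> ceq (shc G) (shc G').
Proof. by move=> H i; apply: H. Qed.

Inductive ty : tctx -> nat -> nat -> term -> ltype -> Prop :=
| tax i L : ty (single i L) 0 1 (Var i) L
| taxl b : ty empty_ctx 0 0 (Lam b) TN
| tlam G m e b L : ty G m e b L -> ty (shc G) m e (Lam b) (TArr (G 0) L)
| tapp G D m e m' e' t u M L :
    ty G m e t (TArr M L) -> tym D m' e' u (TN :: M) ->
    ty (cunion G D) (m + m' + 1) (e + e') (App t u) L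
| tes G D m e m' e' t u L :
    ty G m e t L -> tym D m' e' u (TN :: G 0) ->
    ty (cunion (shc G) D) (m + m') (e + e') (ES t u) L
| tconv G G' m e t L L' : ty G m e t L -> ceq G G' -> teq L L' -> ty G' m e t L'
with tym : tctx -> nat -> nat -> term -> seq ltype -> Prop :=
| tnil t : tym empty_ctx 0 0 t [::]
| tcons G D m e m' e' t L M :
    ty G m e t L -> tym D m' e' t M -> tym (cunion G D) (m + m') (e + e') t (L :: M).

Scheme ty_mut := Induction for ty Sort Prop
with tym_mut := Induction for tym Sort Prop.

Lemma tyc G G' m e t L : ty G m e t L -> ceq G G' -> ty G' m e t L.
Proof. move=> H HG; exact: tconv H HG (teq_refl L). Qed.
Lemma tyt G m e t L L' : ty G m e t L -> teq L L' -> ty G m e t L'.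
Proof. move=> H HL; exact: tconv H (ceq_refl G) HL. Qed.

Lemma inv_cons G m e t L M : tym G m e t (L :: M) ->
  exists G1 D m1 e1 m2 e2, [/\ G = cunion G1 D, ty G1 m1 e1 t L, tym D m2 e2 t M,
    m = m1 + m2 & e = e1 + e2].
Proof. move=> H; inversion H; subst. by exists G0, D, m0, e0, m', e'. Qed.

Lemma tym_meq G m e t M M' : tym G m e t M -> meq M M' ->
  exists G', ceq G G' /\ tym G' m e t M'.
Proof.
move=> H HM; elim: HM G m e H; clear M M'.
- by move=> G m e H; exists G; split=> //; exact: ceq_refl.
- move=> L L' M M' HL HM IH G m e /inv_cons [G1 [D [m1 [e1 [m2 [e2 [-> H1 H2 -> ->]]]]]]].
  have [D' [HD HD']] := IH _ _ _ H2.
  exists (cunion G1 D'); split; first by apply: ceq_cunion => //; exact: ceq_refl.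
  apply: tcons HD' => //. exact: tyt H1 HL.
- move=> L1 L2 M G m e /inv_cons [G1 [D [m1 [e1 [m2 [e2 [-> H1 H2 -> ->]]]]]]].
  move: H2 => /inv_cons [G2 [D2 [m3 [e3 [m4 [e4 [-> H3 H4 -> ->]]]]]]].
  exists (cunion G2 (cunion G1 D2)); split.
  + by move=> i; rewrite /cunion; msolve.
  + have -> : m1 + (m3 + m4) = m3 + (m1 + m4) by lia.
    have -> : e1 + (e3 + e4) = e3 + (e1 + e4) by lia.
    by apply: tcons => //; apply: tcons.
- move=> M1 M2 M3 _ IH1 _ IH2 G m e H.
  have [G1 [HG1 H1]] := IH1 _ _ _ H. have [G2 [HG2 H2]] := IH2 _ _ _ H1.
  exists G2; split=> //; exact: ceq_trans HG1 HG2.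
Qed.

Scheme typing_mut := Induction for typing Sort Prop
with typing_m_mut := Induction for typing_m Sort Prop.

Lemma embed : (forall G m e t L, typing G m e t L -> ty G m e t L) /\
  (forall G m e t M, typing_m G m e t M -> exists G', ceq G G' /\ tym G' m e t M).
Proof.
apply: conj.
- refine (@typing_mut (fun G m e t L (_ : typing G m e t L) => ty G m e t L)
   (fun G m e t M (_ : typing_m G m e t M) => exists G', ceq G G' /\ tym G' m e t M) _ _ _ _ _ _ _).
  + by move=> *; apply: tax.
  + by move=> *; apply: taxl.
  + by move=> G m e b L _ H; apply: (tlam H).
  + move=> G D m e m' e' t u M M' L _ Ht _ [D1 [HD1 Hu]] HM.
    have [D2 [HD2 Hu2]] := tym_meq Hu HM.
    apply: tyc (tapp Ht Hu2) _. apply: ceq_cunion; first exact: ceq_refl.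
    apply: ceq_sym; exact: ceq_trans HD1 HD2.
  + move=> G D m e m' e' t u M' L _ Ht _ [D1 [HD1 Hu]] HM.
    have [D2 [HD2 Hu2]] := tym_meq Hu HM.
    apply: tyc (tes Ht Hu2) _. apply: ceq_cunion; first exact: ceq_refl.
    apply: ceq_sym; exact: ceq_trans HD1 HD2.
  + by move=> t; exists empty_ctx; split; [exact: ceq_refl | exact: tnil].
  + move=> G D m e m' e' t L M _ Ht _ [D1 [HD1 Hu]].
    exists (cunion G D1); split; first by apply: ceq_cunion => //; exact: ceq_refl.
    exact: tcons.
- refine (@typing_m_mut (fun G m e t L (_ : typing G m e t L) => ty G m e t L)
   (fun G m e t M (_ : typing_m G m e t M) => exists G', ceq G G' /\ tym G' m e t M) _ _ _ _ _ _ _).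
  + by move=> *; apply: tax.
  + by move=> *; apply: taxl.
  + by move=> G m e b L _ H; apply: (tlam H).
  + move=> G D m e m' e' t u M M' L _ Ht _ [D1 [HD1 Hu]] HM.
    have [D2 [HD2 Hu2]] := tym_meq Hu HM.
    apply: tyc (tapp Ht Hu2) _. apply: ceq_cunion; first exact: ceq_refl.
    apply: ceq_sym; exact: ceq_trans HD1 HD2.
  + move=> G D m e m' e' t u M' L _ Ht _ [D1 [HD1 Hu]] HM.
    have [D2 [HD2 Hu2]] := tym_meq Hu HM.
    apply: tyc (tes Ht Hu2) _. apply: ceq_cunion; first exact: ceq_refl.
    apply: ceq_sym; exact: ceq_trans HD1 HD2.
  + by move=> t; exists empty_ctx; split; [exact: ceq_refl | exact: tnil].
  + move=> G D m e m' e' t L M _ Ht _ [D1 [HD1 Hu]].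
    exists (cunion G D1); split; first by apply: ceq_cunion => //; exact: ceq_refl.
    exact: tcons.
Qed.

Lemma teq_TN L : teq L TN -> L = TN.
Proof. by move=> H; inversion H. Qed.
Lemma teq_TN' L : teq TN L -> L = TN.
Proof. by move=> H; inversion H. Qed.

Lemma inv_var G m e i L : ty G m e (Var i) L -> [/\ m = 0, e = 1 & ceq G (single i L)].
Proof.
move=> H; remember (Var i) as t eqn:Et; elim: H i Et => //.
- by move=> j L0 i [->]; split=> //; exact: ceq_refl.
- move=> G0 G' m0 e0 tt L0 L' _ IH HG HL i Et; have [-> -> H] := IH _ Et; split=> //.
  move=> j; rewrite -HG H /single; case: (j == i); last exact: meq_refl.
  exact: meq_skip HL meq_nil.
Qed.

Lemma inv_lamTN G m e b : ty G m e (Lam b) TN -> [/\ m = 0, e = 0 & ceq G empty_ctx].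
Proof.
move=> H; remember (Lam b) as t eqn:Et; remember TN as L eqn:EL.
elim: H b Et EL => //.
- by move=> *; split=> //; exact: ceq_refl.
- move=> G0 G' m0 e0 tt L0 L' _ IH HG HL bb Et EL; subst.
  have [-> -> H] := IH _ erefl (teq_TN HL); split=> //.
  exact: ceq_trans (ceq_sym HG) H.
Qed.

Lemma inv_lamArr G m e b M L : ty G m e (Lam b) (TArr M L) ->
  exists G', [/\ ty G' m e b L, meq (G' 0) M & ceq (shc G') G].
Proof.
move=> H; remember (Lam b) as t eqn:Et; remember (TArr M L) as L1 eqn:EL.
elim: H b M L Et EL => //.
- move=> G0 m0 e0 b0 L0 H0 _ b M L [<-] [<- <-].
  by exists G0; split=> //; [exact: meq_refl | exact: ceq_refl].
- move=> G0 G' m0 e0 tt L0 L' _ IH HG HL bb MM LL Et EL; subst.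
  inversion HL as [|M0 M1 L2 L3 HM0 HL2]; subst.
  have [G1 [K1 K2 K3]] := IH _ _ _ erefl erefl.
  exists G1; split; [exact: tyt K1 HL2 | exact: meq_trans K2 HM0 | exact: ceq_trans K3 HG].
Qed.

Lemma inv_app G m0 e0 t u L : ty G m0 e0 (App t u) L ->
  exists G1 D m e m' e' M, [/\ ty G1 m e t (TArr M L), tym D m' e' u (TN :: M),
    ceq G (cunion G1 D), m0 = m + m' + 1 & e0 = e + e'].
Proof.
move=> H; remember (App t u) as t0 eqn:Et.
elim: H t u Et => //.
- move=> G0 D m e m' e' t u M L0 H1 _ H2 t' u' [<- <-].
  by exists G0, D, m, e, m', e', M; split=> //; exact: ceq_refl.
- move=> G0 G' m1 e1 tt L0 L' _ IH HG HL t1 u1 Et; subst.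
  have [G1 [D [m [e [m' [e' [M [H1 H2 H3 H4 H5]]]]]]]] := IH _ _ erefl.
  exists G1, D, m, e, m', e', M; split=> //.
  + apply: tyt H1 _; apply: teq_arr HL; exact: meq_refl.
  + exact: ceq_trans (ceq_sym HG) H3.
Qed.

Lemma inv_es G m0 e0 t u L : ty G m0 e0 (ES t u) L ->
  exists G1 D m e m' e', [/\ ty G1 m e t L, tym D m' e' u (TN :: G1 0),
    ceq G (cunion (shc G1) D), m0 = m + m' & e0 = e + e'].
Proof.
move=> H; remember (ES t u) as t0 eqn:Et.
elim: H t u Et => //.
- move=> G0 D m e m' e' t u L0 H1 _ H2 t' u' [<- <-].
  by exists G0, D, m, e, m', e'; split=> //; exact: ceq_refl.
- move=> G0 G' m1 e1 tt L0 L' _ IH HG HL t1 u1 Et; subst.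
  have [G1 [D [m [e [m' [e' [H1 H2 H3 H4 H5]]]]]]] := IH _ _ erefl.
  exists G1, D, m, e, m', e'; split=> //.
  + exact: tyt H1 HL.
  + exact: ceq_trans (ceq_sym HG) H3.
Qed.

Lemma inv_nil G m e t : tym G m e t [::] -> [/\ G = empty_ctx, m = 0 & e = 0].
Proof. by move=> H; inversion H. Qed.

Lemma tym1_ty G m e t L : tym G m e t [:: L] -> ty G m e t L.
Proof.
move=> /inv_cons [G1 [D [m1 [e1 [m2 [e2 [-> H1 /inv_nil [-> -> ->] -> ->]]]]]]].
rewrite !addn0. eapply tyc; first exact: H1. move=> i; rewrite /cunion /empty_ctx cats0; exact: meq_refl.
Qed.

Lemma ty_tym1 G m e t L : ty G m e t L -> exists G', ceq G' G /\ tym G' m e t [:: L].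
Proof.
move=> H; exists (cunion G empty_ctx); split.
- move=> i; rewrite /cunion /empty_ctx cats0; exact: meq_refl.
- rewrite -[m]addn0 -[e]addn0; apply: tcons H (tnil _).
Qed.


Definition push (f : nat -> nat) (N : nat) (G : tctx) : tctx :=
  fun j => flatten [seq G i | i <- iota 0 N & f i == j].
Definition supp (G : tctx) N := forall i, N <= i -> G i = [::].

Lemma flat_none (G : tctx) (P : pred nat) s :
  (forall k, k \in s -> P k -> G k = [::]) -> flatten [seq G i | i <- s & P i] = [::].
Proof.
elim: s => //= x s IH H.
have H' : forall k, k \in s -> P k -> G k = [::] by move=> k Hk; apply: H; rewrite inE Hk orbT.
case: ifP => Px /=; last exact: IH.
by rewrite H ?inE ?eqxx //= IH.
Qed.

Lemma flat_one (G : tctx) (P : pred nat) s k0 : uniq s -> k0 \in s -> P k0 ->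
  (forall k, k \in s -> P k -> k != k0 -> G k = [::]) -> flatten [seq G i | i <- s & P i] = G k0.
Proof.
elim: s => [|x s IH] //= /andP [nx us] Hin Pk H.
have H' : forall k, k \in s -> P k -> k != k0 -> G k = [::].
{ by move=> k Hk; apply: (H); rewrite inE Hk orbT. }
move: Hin; rewrite inE => /orP [/eqP Ex | Hin].
- subst x; rewrite Pk /= flat_none ?cats0 // => k Hk Pk'; apply: (H') => //.
  by apply/eqP => E; subst; rewrite Hk in nx.
- have nxk : x != k0 by apply/eqP => E; subst; rewrite Hin in nx.
  case: ifP => Px /=.
  + by rewrite (H x) ?inE ?eqxx //= (IH us Hin Pk H').
  + exact: (IH us Hin Pk H').
Qed.

Lemma push_none f N G j : (forall k, k < N -> f k = j -> G k = [::]) -> push f N G j = [::].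
Proof.
move=> H; apply: flat_none => k; rewrite mem_iota add0n => /andP [_ Hk] /eqP; exact: H.
Qed.

Lemma push_one f N G j k0 : (k0 < N -> f k0 = j) -> (N <= k0 -> G k0 = [::]) ->
  (forall k, k < N -> f k = j -> k <> k0 -> G k = [::]) -> push f N G j = G k0.
Proof.
move=> H1 H2 H3; case: (ltnP k0 N) => Hk0.
- apply: flat_one; rewrite ?iota_uniq ?mem_iota ?add0n ?Hk0 //; first by apply/eqP; apply: H1.
  move=> k; rewrite mem_iota add0n => /andP [_ Hk] /eqP Hf /eqP Hne; exact: H3.
- rewrite H2 //; apply: push_none => k Hk Hf; apply: H3 => // E; subst; lia.
Qed.

Lemma push_cunion f N G D j : meq (push f N (cunion G D) j) (push f N G j ++ push f N D j).
Proof.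
rewrite /push /cunion; elim: (iota 0 N) => [|x s IH] /=; first exact: meq_refl.
case: ifP => _ /=; last exact: IH.
rewrite IH; msolve.
Qed.

Lemma push_ceq f N G G' : ceq G G' -> ceq (push f N G) (push f N G').
Proof.
move=> H j; rewrite /push; elim: (iota 0 N) => [|x s IH] /=; first exact: meq_refl.
case: ifP => _ /=; last exact: IH.
rewrite IH (H x); exact: meq_refl.
Qed.

Lemma push_up0 f N G : push (upren f) N.+1 G 0 = G 0.
Proof. apply: push_one => // [[|k]] //. Qed.

Lemma push_upS f N G j : push (upren f) N.+1 G j.+1 = push f N (shc G) j.
Proof.
rewrite /push.
have -> : iota 0 N.+1 = 0 :: [seq 1 + i | i <- iota 0 N] by rewrite -iotaDl.
rewrite /= filter_map -map_comp.
congr flatten; congr map; apply: eq_filter => i /=; by rewrite eqSS.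
Qed.

Lemma supp_occ : (forall G m e t L, ty G m e t L -> forall i, ~~ occurs i t -> G i = [::]) /\
  (forall G m e t M, tym G m e t M -> forall i, ~~ occurs i t -> G i = [::]).
Proof.
apply: conj.
- refine (@ty_mut (fun G m e t L (_ : ty G m e t L) => forall i, ~~ occurs i t -> G i = [::])
   (fun G m e t M (_ : tym G m e t M) => forall i, ~~ occurs i t -> G i = [::]) _ _ _ _ _ _ _ _).
  + by move=> i L j /=; rewrite /single eq_sym => /negbTE ->.
  + by [].
  + by move=> G m e b L _ IH i /= Hi; apply: IH.
  + move=> G D m e m' e' t u M L _ IH1 _ IH2 i /=; rewrite negb_or => /andP [H1 H2].
    by rewrite /cunion IH1 // IH2.
  + move=> G D m e m' e' t u L _ IH1 _ IH2 i /=; rewrite negb_or => /andP [H1 H2].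
    by rewrite /cunion /shc IH1 // IH2.
  + move=> G G' m e t L L' _ IH HG _ i Hi; have := HG i; rewrite IH // => /meq_nil_inv //.
  + by [].
  + move=> G D m e m' e' t L M _ IH1 _ IH2 i Hi; by rewrite /cunion IH1 // IH2.
- refine (@tym_mut (fun G m e t L (_ : ty G m e t L) => forall i, ~~ occurs i t -> G i = [::])
   (fun G m e t M (_ : tym G m e t M) => forall i, ~~ occurs i t -> G i = [::]) _ _ _ _ _ _ _ _).
  + by move=> i L j /=; rewrite /single eq_sym => /negbTE ->.
  + by [].
  + by move=> G m e b L _ IH i /= Hi; apply: IH.
  + move=> G D m e m' e' t u M L _ IH1 _ IH2 i /=; rewrite negb_or => /andP [H1 H2].
    by rewrite /cunion IH1 // IH2.
  + move=> G D m e m' e' t u L _ IH1 _ IH2 i /=; rewrite negb_or => /andP [H1 H2].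
    by rewrite /cunion /shc IH1 // IH2.
  + move=> G G' m e t L L' _ IH HG _ i Hi; have := HG i; rewrite IH // => /meq_nil_inv //.
  + by [].
  + move=> G D m e m' e' t L M _ IH1 _ IH2 i Hi; by rewrite /cunion IH1 // IH2.
Qed.

Lemma occ_bound t : exists N, forall i, N <= i -> ~~ occurs i t.
Proof.
elim: t => [n|b [N IH]|t [N1 IH1] u [N2 IH2]|t [N1 IH1] u [N2 IH2]] /=.
- exists n.+1 => i Hi; apply/eqP => E; subst; lia.
- exists N => i Hi; apply: IH; lia.
- exists (maxn N1 N2) => i Hi; rewrite negb_or IH1 ?IH2 //; lia.
- exists (maxn N1 N2) => i Hi; rewrite negb_or IH1 ?IH2 //; lia.
Qed.

Lemma ty_supp G m e t L : ty G m e t L -> exists N, supp G N.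
Proof.
move=> H; have [N HN] := occ_bound t; exists N => i Hi; apply: (proj1 supp_occ) H _ (HN _ Hi).
Qed.
Lemma tym_supp G m e t M : tym G m e t M -> exists N, supp G N.
Proof.
move=> H; have [N HN] := occ_bound t; exists N => i Hi; apply: (proj2 supp_occ) H _ (HN _ Hi).
Qed.

Lemma supp_cunion G D N : supp (cunion G D) N -> supp G N /\ supp D N.
Proof. move=> H; split=> i Hi; have := H i Hi; rewrite /cunion; by case: (G i). Qed.

Lemma ren_ty : (forall G m e t L, ty G m e t L -> forall f N, supp G N -> ty (push f N G) m e (ren f t) L) /\
  (forall G m e t M, tym G m e t M -> forall f N, supp G N ->
     exists G', ceq G' (push f N G) /\ tym G' m e (ren f t) M).
Proof.
have Hax : forall i L f N, supp (single i L) N -> ty (push f N (single i L)) 0 1 (ren f (Var i)) L.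
{ move=> i L f N HS /=. have HiN : i < N.
  { case: (ltnP i N) => // H; have := HS i H; by rewrite /single eqxx. }
  eapply tyc; first exact: (tax (f i) L). move=> j.
  case: (eqVneq j (f i)) => [->|Hne].
  - rewrite (@push_one f N (single i L) (f i) i).
    + by rewrite /single !eqxx; exact: meq_refl.
    + by [].
    + by move=> Hle; exfalso; lia.
    + by move=> k _ _ Hk; rewrite /single; case: eqP.
  - rewrite push_none; first by rewrite /single (negbTE Hne); exact: meq_refl.
    by move=> k _ Hk; rewrite /single; case: eqP => // E; subst; rewrite eqxx in Hne. }
have Hemp : forall f N, ceq empty_ctx (push f N empty_ctx).
{ move=> f N j; rewrite push_none //; exact: meq_refl. }
have Hlam : forall G m e b L f N, supp (shc G) N ->
  (forall f N, supp G N -> ty (push f N G) m e (ren f b) L) ->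
  ty (push f N (shc G)) m e (ren f (Lam b)) (TArr (G 0) L).
{ move=> G m e b L f N HS IH /=.
  have HS' : supp G N.+1 by move=> [|i] Hi //; apply: HS.
  have := tlam (IH (upren f) _ HS'); rewrite push_up0 => H.
  apply: tyc H _ => j; rewrite /shc push_upS; exact: meq_refl. }
have Happ : forall G D m e m' e' t u M L f N, supp (cunion G D) N ->
  (forall f N, supp G N -> ty (push f N G) m e (ren f t) (TArr M L)) ->
  (forall f N, supp D N -> exists G', ceq G' (push f N D) /\ tym G' m' e' (ren f u) (TN :: M)) ->
  ty (push f N (cunion G D)) (m + m' + 1) (e + e') (ren f (App t u)) L.
{ move=> G D m e m' e' t u M L f N /supp_cunion [H1 H2] IH1 IH2 /=.
  have [D' [HD Hu]] := IH2 f N H2.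
  apply: tyc (tapp (IH1 f N H1) Hu) _ => j. rewrite /cunion (HD j) push_cunion; exact: meq_refl. }
have Hes : forall G D m e m' e' t u L f N, supp (cunion (shc G) D) N ->
  (forall f N, supp G N -> ty (push f N G) m e (ren f t) L) ->
  (forall f N, supp D N -> exists G', ceq G' (push f N D) /\ tym G' m' e' (ren f u) (TN :: G 0)) ->
  ty (push f N (cunion (shc G) D)) (m + m') (e + e') (ren f (ES t u)) L.
{ move=> G D m e m' e' t u L f N /supp_cunion [H1 H2] IH1 IH2 /=.
  have HS' : supp G N.+1 by move=> [|i] Hi //; apply: H1.
  have [D' [HD Hu]] := IH2 f N H2.
  have Ht := IH1 (upren f) _ HS'. rewrite -(push_up0 f N G) in Hu.
  apply: tyc (tes Ht Hu) _ => j. rewrite /cunion (HD j) push_cunion /shc push_upS; exact: meq_refl. }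
have Hconv : forall G G' m e t L L' f N, supp G' N -> ceq G G' -> teq L L' ->
  (forall f N, supp G N -> ty (push f N G) m e (ren f t) L) -> ty (push f N G') m e (ren f t) L'.
{ move=> G G' m e t L L' f N HS HG HL IH.
  have HS0 : supp G N by move=> i Hi; have := HG i; rewrite HS // => /meq_sym /meq_nil_inv.
  exact: tconv (IH f N HS0) (push_ceq _ _ HG) HL. }
have Hcons : forall G D m e m' e' t L M f N, supp (cunion G D) N ->
  (forall f N, supp G N -> ty (push f N G) m e (ren f t) L) ->
  (forall f N, supp D N -> exists G', ceq G' (push f N D) /\ tym G' m' e' (ren f t) M) ->
  exists G', ceq G' (push f N (cunion G D)) /\ tym G' (m + m') (e + e') (ren f t) (L :: M).
{ move=> G D m e m' e' t L M f N /supp_cunion [H1 H2] IH1 IH2.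
  have [D' [HD Hu]] := IH2 f N H2.
  exists (cunion (push f N G) D'); split; last exact: tcons (IH1 f N H1) Hu.
  move=> j; rewrite /cunion (HD j) push_cunion; exact: meq_refl. }
apply: conj.
- refine (@ty_mut (fun G m e t L (_ : ty G m e t L) => forall f N, supp G N -> ty (push f N G) m e (ren f t) L)
   (fun G m e t M (_ : tym G m e t M) => forall f N, supp G N ->
     exists G', ceq G' (push f N G) /\ tym G' m e (ren f t) M) _ _ _ _ _ _ _ _).
  + move=> *; exact: Hax.
  + move=> b f N _ /=; eapply tyc; [exact: taxl | exact: Hemp].
  + move=> G m e b L _ IH f N HS; exact: Hlam HS IH.
  + move=> G D m e m' e' t u M L _ IH1 _ IH2 f N HS; exact: Happ HS IH1 IH2.
  + move=> G D m e m' e' t u L _ IH1 _ IH2 f N HS; exact: Hes HS IH1 IH2.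
  + move=> G G' m e t L L' _ IH HG HL f N HS; exact: Hconv HS HG HL IH.
  + move=> t f N _; exists empty_ctx; split; [exact: Hemp | exact: tnil].
  + move=> G D m e m' e' t L M _ IH1 _ IH2 f N HS; exact: Hcons HS IH1 IH2.
- refine (@tym_mut (fun G m e t L (_ : ty G m e t L) => forall f N, supp G N -> ty (push f N G) m e (ren f t) L)
   (fun G m e t M (_ : tym G m e t M) => forall f N, supp G N ->
     exists G', ceq G' (push f N G) /\ tym G' m e (ren f t) M) _ _ _ _ _ _ _ _).
  + move=> *; exact: Hax.
  + move=> b f N _ /=; eapply tyc; [exact: taxl | exact: Hemp].
  + move=> G m e b L _ IH f N HS; exact: Hlam HS IH.
  + move=> G D m e m' e' t u M L _ IH1 _ IH2 f N HS; exact: Happ HS IH1 IH2.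
  + move=> G D m e m' e' t u L _ IH1 _ IH2 f N HS; exact: Hes HS IH1 IH2.
  + move=> G G' m e t L L' _ IH HG HL f N HS; exact: Hconv HS HG HL IH.
  + move=> t f N _; exists empty_ctx; split; [exact: Hemp | exact: tnil].
  + move=> G D m e m' e' t L M _ IH1 _ IH2 f N HS; exact: Hcons HS IH1 IH2.
Qed.

Lemma push_lift_lt k N G j : j < k -> push (fun j => k + j) N G j = [::].
Proof. move=> H; apply: push_none => i _ E; lia. Qed.
Lemma push_lift k N G i : supp G N -> push (fun j => k + j) N G (k + i) = G i.
Proof.
move=> HS; apply: push_one => //; first exact: HS.
move=> j _ E; lia.
Qed.

Lemma push_gcv_lt d N G j : j < d -> push (fun j => j.-1 + d) N G j = [::].
Proof. move=> H; apply: push_none => i _ E; lia. Qed.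
Lemma push_gcv d N G i : supp G N -> G 0 = [::] -> push (fun j => j.-1 + d) N G (i + d) = G i.+1.
Proof.
move=> HS H0; apply: push_one => //; first exact: HS.
move=> [|j] _ E Hne //; exfalso; apply: Hne; simpl in E; lia.
Qed.


Definition replP (C : ctx) (L : ltype) (Q : ltype -> Prop) := forall G m e r,
  ty G m e (plug C r) L ->
  exists G0 L0 m0 e0 Gc mc ec, [/\ Q L0, ty G0 m0 e0 r L0, m = mc + m0 /\ e = ec + e0,
    ceq G (cunion Gc (unsh (depth C) G0)) &
    forall r' G0' m' e', ty G0' m' e' r' L0 ->
      (forall i, i < depth C -> meq (G0' i) (G0 i)) ->
      ty (cunion Gc (unsh (depth C) G0')) (mc + m') (ec + e') (plug C r') L].

Lemma repl_hole L : replP Hole L (fun L0 => L0 = L).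
Proof.
move=> G m e r /= H; exists G, L, m, e, empty_ctx, 0, 0; split=> //.
- move=> i; rewrite /cunion /unsh addn0; exact: meq_refl.
- move=> r' G0' m' e' H' _ /=; rewrite !add0n; eapply tyc; first exact: H'.
  move=> i; rewrite /cunion /unsh addn0; exact: meq_refl.
Qed.

Lemma repl_app C t L Q : (forall L', replP C L' Q) -> replP (CAppL C t) L Q.
Proof.
move=> IH G m e r /= /inv_app [G1 [D [m1 [e1 [m2 [e2 [M [H1 H2 HG -> ->]]]]]]]].
have [G0 [L0 [m0 [e0 [Gc [mc [ec [HQ H0 [-> ->] HG1 HR]]]]]]]] := IH _ _ _ _ _ H1.
exists G0, L0, m0, e0, (cunion Gc D), (mc + m2 + 1), (ec + e2); split=> //; try (split; lia).
- move=> i; rewrite (HG i) /cunion (HG1 i) /cunion; msolve.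
- move=> r' G0' m' e' H' Hag.
  have := tapp (HR _ _ _ _ H' Hag) H2.
  have -> : mc + m' + m2 + 1 = mc + m2 + 1 + m' by lia.
  have -> : ec + e' + e2 = ec + e2 + e' by lia.
  move=> H3; eapply tyc; first exact: H3.
  move=> i; rewrite /cunion; msolve.
Qed.

Lemma repl_es C t L Q : replP C L Q -> replP (CESL C t) L Q.
Proof.
move=> IH G m e r /= /inv_es [G1 [D [m1 [e1 [m2 [e2 [H1 H2 HG -> ->]]]]]]].
have [G0 [L0 [m0 [e0 [Gc [mc [ec [HQ H0 [-> ->] HG1 HR]]]]]]]] := IH _ _ _ _ H1.
exists G0, L0, m0, e0, (cunion (shc Gc) D), (mc + m2), (ec + e2); split=> //; try (split; lia).
- move=> i; rewrite (HG i) /cunion /shc (HG1 i.+1) /cunion /unsh addSnnS; msolve.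
- move=> r' G0' m' e' H' Hag.
  have Hag' : forall i, i < depth C -> meq (G0' i) (G0 i) by move=> i Hi; apply: Hag; lia.
  have H3 := HR _ _ _ _ H' Hag'.
  have HM : meq (TN :: G1 0) (TN :: (cunion Gc (unsh (depth C) G0')) 0).
  { rewrite (HG1 0) /cunion /unsh add0n (Hag (depth C)) //; exact: meq_refl. }
  have [D' [HD' H4]] := tym_meq H2 HM.
  have := tes H3 H4.
  have -> : mc + m' + m2 = mc + m2 + m' by lia.
  have -> : ec + e' + e2 = ec + e2 + e' by lia.
  move=> H5; eapply tyc; first exact: H5.
  move=> i; rewrite /cunion /shc /unsh -(HD' i) addSnnS; msolve.
Qed.

Lemma N_repl C : is_N C -> forall L, replP C L (fun _ => True).
Proof.
elim => [|N t HN IH|N t HN IH] L.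
- move=> G m e r H; have [G0 [L0 [m0 [e0 [Gc [mc [ec [_ H1 H2 H3 H4]]]]]]]] := repl_hole H.
  by exists G0, L0, m0, e0, Gc, mc, ec.
- exact: repl_app.
- exact: repl_es.
Qed.

Lemma ans_ty a G m e : answer a -> ty G m e a TN -> [/\ m = 0, e = 0 & ceq G empty_ctx].
Proof.
move=> Ha; elim: Ha G m e => [b|a1 a2 Ha1 IHa Ha2 IHa'] G m e.
- by move/inv_lamTN => [-> -> H].
- move/inv_es => [G1 [D [m1 [e1 [m2 [e2 [H1 H2 HG -> ->]]]]]]].
  have [-> -> HG1] := IHa _ _ _ H1.
  have HM : meq (TN :: G1 0) [:: TN] by rewrite (HG1 0); exact: meq_refl.
  have [D' [HD' /tym1_ty H3]] := tym_meq H2 HM.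
  have [-> -> HD2] := IHa' _ _ _ H3; split=> // i.
  rewrite (HG i) /cunion /shc (HG1 i.+1) (HD' i) (HD2 i); exact: meq_refl.
Qed.

Lemma A_repl C : is_A C -> replP C TN (fun L0 => L0 = TN).
Proof.
elim => [|a A Ha HA IH|A t HA IH].
- exact: repl_hole.
- move=> G m e r /= /inv_es [G1 [D [m1 [e1 [m2 [e2 [H1 H2 HG -> ->]]]]]]].
  have [Em1 Ee1 HG1] := ans_ty Ha H1; subst m1 e1.
  have HM : meq (TN :: G1 0) [:: TN] by rewrite (HG1 0); exact: meq_refl.
  have [D' [HD' /tym1_ty H3]] := tym_meq H2 HM.
  have [G0 [L0 [m0 [e0 [Gc [mc [ec [HQ H0 [-> ->] HG2 HR]]]]]]]] := IH _ _ _ _ H3.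
  exists G0, L0, m0, e0, (cunion (shc G1) Gc), mc, ec; split=> //; try (split; lia).
  + move=> i; rewrite (HG i) /cunion (HD' i) (HG2 i) /cunion; msolve.
  + move=> r' G0' m' e' H' Hag.
    have H4 := HR _ _ _ _ H' Hag.
    have [X [HX H5]] := ty_tym1 H4.
    have HM' : meq [:: TN] (TN :: G1 0) by rewrite (HG1 0); exact: meq_refl.
    have [X' [HX' H6]] := tym_meq H5 HM'.
    have := tes H1 H6; rewrite !add0n => H7; eapply tyc; first exact: H7.
    move=> i; rewrite /cunion -(HX' i) (HX i) /cunion; msolve.
- exact: repl_es.
Qed.

Lemma plug_cplug A N r : plug (cplug A N) r = plug A (plug N r).
Proof. by elim: A => [|A IH t|t A IH|A IH t|t A IH] //=; rewrite IH. Qed.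
Lemma depth_cplug A N : depth (cplug A N) = depth A + depth N.
Proof. by elim: A => [|A IH t|t A IH|A IH t|t A IH] //=; rewrite IH. Qed.

Lemma Y_repl C : is_Y C -> replP C TN (fun _ => True).
Proof.
move=> [A [N [HA [HN ->]]]] G m e r; rewrite plug_cplug => H.
have [G0 [L0 [m0 [e0 [Gc [mc [ec [-> H0 [-> ->] HG HR]]]]]]]] := A_repl HA H.
have [G00 [L00 [m00 [e00 [Gc2 [mc2 [ec2 [_ H00 [-> ->] HG0 HR0]]]]]]]] := N_repl HN H0.
exists G00, L00, m00, e00, (cunion Gc (unsh (depth A) Gc2)), (mc + mc2), (ec + ec2).
rewrite depth_cplug; split=> //; try (split; lia).
- move=> i; rewrite (HG i) /cunion /unsh (HG0 (i + depth A)) /cunion /unsh -addnA; msolve.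
- move=> r' G0' m' e' H' Hag.
  have Hag1 : forall i, i < depth N -> meq (G0' i) (G00 i) by move=> i Hi; apply: Hag; lia.
  have H1 := HR0 _ _ _ _ H' Hag1.
  have Hag2 : forall i, i < depth A -> meq ((cunion Gc2 (unsh (depth N) G0')) i) (G0 i).
  { move=> i Hi; rewrite (HG0 i) /cunion /unsh (Hag (i + depth N)); [exact: meq_refl | lia]. }
  have := HR _ _ _ _ H1 Hag2; rewrite plug_cplug !addnA => H2; eapply tyc; first exact: H2.
  move=> i; rewrite /cunion /unsh -addnA; msolve.
Qed.

Lemma S_repl C : is_S C -> forall G m e r L, ty G m e (plug C r) L ->
  exists G0 m0 e0 Gc mc ec, [/\ ty G0 m0 e0 r L, m = mc + m0 /\ e = ec + e0,
    ceq G (cunion Gc (unsh (depth C) G0)) &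
    forall r' G0' m' e' L', ty G0' m' e' r' L' ->
      (forall i, i < depth C -> meq (G0' i) (G0 i)) ->
      ty (cunion Gc (unsh (depth C) G0')) (mc + m') (ec + e') (plug C r') L'].
Proof.
elim => [|S u HS IH] G m e r L /=.
- move=> H; exists G, m, e, empty_ctx, 0, 0; split=> //.
  + move=> i; rewrite /cunion /unsh addn0; exact: meq_refl.
  + move=> r' G0' m' e' L' H' _ /=; rewrite !add0n; eapply tyc; first exact: H'.
    move=> i; rewrite /cunion /unsh addn0; exact: meq_refl.
- move/inv_es => [G1 [D [m1 [e1 [m2 [e2 [H1 H2 HG -> ->]]]]]]].
  have [G0 [m0 [e0 [Gc [mc [ec [H0 [-> ->] HG1 HR]]]]]]] := IH _ _ _ _ _ H1.
  exists G0, m0, e0, (cunion (shc Gc) D), (mc + m2), (ec + e2); split=> //; try (split; lia).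
  + move=> i; rewrite (HG i) /cunion /shc (HG1 i.+1) /cunion /unsh addSnnS; msolve.
  + move=> r' G0' m' e' L' H' Hag.
    have Hag' : forall i, i < depth S -> meq (G0' i) (G0 i) by move=> i Hi; apply: Hag; lia.
    have H3 := HR _ _ _ _ _ H' Hag'.
    have HM : meq (TN :: G1 0) (TN :: (cunion Gc (unsh (depth S) G0')) 0).
    { rewrite (HG1 0) /cunion /unsh add0n (Hag (depth S)) //; exact: meq_refl. }
    have [D' [HD' H4]] := tym_meq H2 HM.
    have := tes H3 H4.
    have -> : mc + m' + m2 = mc + m2 + m' by lia.
    have -> : ec + e' + e2 = ec + e2 + e' by lia.
    move=> H5; eapply tyc; first exact: H5.
    move=> i; rewrite /cunion /shc /unsh -(HD' i) addSnnS; msolve.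
Qed.


Lemma upren_ext f g : f =1 g -> upren f =1 upren g.
Proof. by move=> H [|i] //=; rewrite H. Qed.

Lemma ren_ext t f g : f =1 g -> ren f t = ren g t.
Proof.
elim: t f g => [n|b IH|t IH1 u IH2|t IH1 u IH2] f g H /=.
- by rewrite H.
- by rewrite (IH _ _ (upren_ext H)).
- by rewrite (IH1 _ _ H) (IH2 _ _ H).
- by rewrite (IH1 _ _ (upren_ext H)) (IH2 _ _ H).
Qed.

Lemma ren_ren t f g : ren f (ren g t) = ren (fun j => f (g j)) t.
Proof.
elim: t f g => [n|b IH|t IH1 u IH2|t IH1 u IH2] f g /=.
- by [].
- by rewrite IH; congr Lam; apply: ren_ext => [[|i]].
- by rewrite IH1 IH2.
- by rewrite IH1 IH2; congr ES; apply: ren_ext => [[|i]].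
Qed.

Lemma ren_id t : ren id t = t.
Proof.
elim: t => [n|b IH|t IH1 u IH2|t IH1 u IH2] //=.
- by rewrite (ren_ext _ (g := id)) ?IH // => [[|i]].
- by rewrite IH1 IH2.
- by rewrite (ren_ext _ (g := id)) ?IH1 ?IH2 // => [[|i]].
Qed.

Lemma lift0 u : Defs.lift 0 u = u.
Proof. by rewrite /Defs.lift (ren_ext _ (g := id)) ?ren_id. Qed.

Lemma lift_lift d u : Defs.lift d (Defs.lift 1 u) = Defs.lift d.+1 u.
Proof. rewrite /Defs.lift ren_ren; apply: ren_ext => j /=; lia. Qed.

Lemma m_root S : is_S S -> forall G m e b u L,
  ty G m e (App (plug S (Lam b)) u) L ->
  exists m', m = m'.+1 /\ ty G m' e (plug S (ES b (Defs.lift (depth S) u))) L.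
Proof.
elim => [|S1 w HS IH] G m e b u L /=.
- move/inv_app => [G1 [D [m1 [e1 [m2 [e2 [M [H1 H2 HG -> ->]]]]]]]].
  have [G' [Hb HM HG']] := inv_lamArr H1.
  have [D' [HD H3]] := tym_meq H2 (meq_skip (teq_refl TN) (meq_sym HM)).
  exists (m1 + m2); split; first lia.
  rewrite lift0; eapply tyc; first exact: tes Hb H3.
  move=> i; rewrite (HG i) /cunion -(HD i) -(HG' i); exact: meq_refl.
- move/inv_app => [G1 [D [m1 [e1 [m2 [e2 [M [H1 H2 HG -> ->]]]]]]]].
  move: H1 => /inv_es [G2 [D2 [m3 [e3 [m4 [e4 [H3 H4 HG1 -> ->]]]]]]].
  have [N HN] := tym_supp H2.
  have [D' [HD' H5]] := (proj2 ren_ty) _ _ _ _ _ H2 (fun j => 1 + j) N HN.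
  have [m' [Em' H6]] := IH _ _ _ _ _ _ (tapp H3 H5).
  rewrite lift_lift in H6.
  have HM : meq (TN :: G2 0) (TN :: (cunion G2 D') 0).
  { rewrite /cunion (HD' 0) push_lift_lt // cats0; exact: meq_refl. }
  have [D2' [HD2 H7]] := tym_meq H4 HM.
  exists (m' + m4); split; first lia.
  have H8 := tes H6 H7.
  have -> : e3 + e4 + e2 = e3 + e2 + e4 by lia.
  eapply tyc; first exact: H8.
  move=> i; rewrite (HG i) /cunion (HG1 i) /cunion /shc -(HD2 i) (HD' i.+1).
  rewrite -add1n push_lift //; msolve.
Qed.

Fixpoint tmsize t := match t with
  | Var _ => 1 | Lam b => (tmsize b).+1
  | App t u => (tmsize t + tmsize u).+1 | ES t u => (tmsize t + tmsize u).+1 end.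
Fixpoint csize C := match C with
  | Hole => 0 | CAppL C t => (csize C + tmsize t).+1 | CAppR t C => (csize C + tmsize t).+1
  | CESL C t => (csize C + tmsize t).+1 | CESR t C => (csize C + tmsize t).+1 end.
Lemma size_plug C r : tmsize (plug C r) = csize C + tmsize r.
Proof. elim: C => //= [C IH t|t C IH|C IH t|t C IH]; rewrite IH; lia. Qed.
Lemma size_ren t f : tmsize (ren f t) = tmsize t.
Proof. by elim: t f => //= [b IH|t IH1 u IH2|t IH1 u IH2] f; rewrite ?IH ?IH1 ?IH2. Qed.

Lemma gcv_root G m e r r' L : ty G m e r L -> root_gcv r r' ->
  ty G m e r' L /\ tmsize r' < tmsize r.
Proof.
move=> H Hr; move: Hr H => [b [S [v [HS [[b0 ->] [-> [Hocc ->]]]]]]] H; split; last first.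
{ rewrite /= !size_plug size_ren /=; lia. }
move: H => /inv_es [G1 [D [m1 [e1 [m2 [e2 [H1 H2 HG -> ->]]]]]]].
have HG10 : G1 0 = [::] := (proj1 supp_occ) _ _ _ _ _ H1 _ Hocc.
rewrite HG10 in H2; move/tym1_ty: H2 => H2.
have [G0 [m0 [e0 [Gc [mc [ec [H0 [-> ->] HD HR]]]]]]] := S_repl HS H2.
have [Em0 Ee0 HG0] := inv_lamTN H0; subst m0 e0.
have [N HN] := ty_supp H1.
have Hb := (proj1 ren_ty) _ _ _ _ _ H1 (fun j => j.-1 + depth S) N HN.
have Hag : forall i, i < depth S -> meq (push (fun j => j.-1 + depth S) N G1 i) (G0 i).
{ move=> i Hi; rewrite push_gcv_lt // (HG0 i); exact: meq_refl. }
have H3 := HR _ _ _ _ _ Hb Hag.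
have -> : m1 + (mc + 0) = mc + m1 by lia.
have -> : e1 + (ec + 0) = ec + e1 by lia.
eapply tyc; first exact: H3.
move=> i; rewrite (HG i) /cunion /shc (HD i) /cunion /unsh (HG0 (i + depth S)) push_gcv //.
rewrite /empty_ctx; msolve.
Qed.


Lemma e_root K L G m e u : replP K L (fun _ => True) ->
  ty G m e (ES (plug K (Var (depth K))) u) L ->
  exists e', e = e'.+1 /\ ty G m e' (ES (plug K (Defs.lift (depth K).+1 u)) u) L.
Proof.
move=> HK /inv_es [G1 [D [m1 [e1 [m2 [e2 [H1 H2 HG -> ->]]]]]]].
have [G0 [L0 [m0 [e0 [Gc [mc [ec [_ H0 [-> ->] HG1 HR]]]]]]]] := HK _ _ _ _ H1.
have [Em0 Ee0 HG0] := inv_var H0; subst m0 e0.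
set d := depth K in HG1 HR *.
have HM : meq (TN :: G1 0) (TN :: L0 :: Gc 0).
{ rewrite (HG1 0) /cunion /unsh add0n (HG0 d) /single eqxx.
  apply: meq_skip (teq_refl TN) _; apply: meq_sym; exact: meq_consC. }
have [D' [HD' H3]] := tym_meq H2 HM.
move: H3 => /inv_cons [Dn [Dr [mn [en [mr [er [EDr Hn Hr -> ->]]]]]]].
move: Hr => /inv_cons [Du1 [Du2 [mu1 [eu1 [mu2 [eu2 [EDu Hu1 Hu2 -> ->]]]]]]].
subst D' Dr.
have Hrest := tcons Hn Hu2.
have [N HN] := ty_supp Hu1.
have Hl := (proj1 ren_ty) _ _ _ _ _ Hu1 (fun j => d.+1 + j) N HN.
have Hag : forall i, i < d -> meq (push (fun j => d.+1 + j) N Du1 i) (G0 i).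
{ move=> i Hi; rewrite push_lift_lt; last lia.
  rewrite (HG0 i) /single; case: eqP => [E|_]; [lia | exact: meq_refl]. }
have H4 := HR _ _ _ _ Hl Hag.
have HM2 : meq (TN :: Gc 0) (TN :: (cunion Gc (unsh d (push (fun j => d.+1 + j) N Du1))) 0).
{ rewrite /cunion /unsh add0n push_lift_lt // cats0; exact: meq_refl. }
have [D'' [HD'' H5]] := tym_meq Hrest HM2.
have H6 := tes H4 H5.
exists (ec + eu1 + (en + eu2)); split; first lia.
have -> : mc + 0 + (mn + (mu1 + mu2)) = mc + mu1 + (mn + mu2) by lia.
eapply tyc; first exact: H6.
move=> i; rewrite (HG i) /cunion /shc (HG1 i.+1) (HD' i) /cunion -(HD'' i) /cunion /unsh.
rewrite (HG0 (i.+1 + d)) /single.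
have -> : (i.+1 + d == d) = false by apply/eqP; lia.
have -> : i.+1 + d = d.+1 + i by lia.
rewrite push_lift //; msolve.
Qed.

Definition SRprop (l : ylab) G m e t' :=
  match l with
  | YM => exists m', m = m'.+1 /\ ty G m' e t' TN
  | YeAY | YeYN => exists e', e = e'.+1 /\ ty G m e' t' TN
  | Ygcv => ty G m e t' TN
  end.

Lemma SR l t t' G m e : ystep l t t' -> ty G m e t TN ->
  SRprop l G m e t' /\ (l = Ygcv -> tmsize t' < tmsize t).
Proof.
move=> [C [r [r' [-> [-> Hl]]]]] H.
case: l Hl => [[HY Hr]|[HA Hr]|[HY Hr]|[HY Hr]].
- have [G0 [L0 [m0 [e0 [Gc [mc [ec [_ H0 [-> ->] HG HR]]]]]]]] := Y_repl HY H.
  case: Hr => [S [b [u [HS [Er Er']]]]]; subst r r'.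
  have [m' [-> H1]] := m_root HS H0.
  split=> //; exists (mc + m'); split; first lia.
  eapply tyc; first exact: HR _ _ _ _ H1 (fun i _ => meq_refl _).
  exact: ceq_sym.
- have [G0 [L0 [m0 [e0 [Gc [mc [ec [EL H0 [-> ->] HG HR]]]]]]]] := A_repl HA H.
  case: Hr => [K [u [HK [Er Er']]]]; subst r r' L0.
  have [e' [-> H1]] := e_root (Y_repl HK) H0.
  split=> //; exists (ec + e'); split; first lia.
  eapply tyc; first exact: HR _ _ _ _ H1 (fun i _ => meq_refl _).
  exact: ceq_sym.
- have [G0 [L0 [m0 [e0 [Gc [mc [ec [_ H0 [-> ->] HG HR]]]]]]]] := Y_repl HY H.
  case: Hr => [K [u [HK [Er Er']]]]; subst r r'.
  have [e' [-> H1]] := e_root (@N_repl K HK L0) H0.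
  split=> //; exists (ec + e'); split; first lia.
  eapply tyc; first exact: HR _ _ _ _ H1 (fun i _ => meq_refl _).
  exact: ceq_sym.
- have [G0 [L0 [m0 [e0 [Gc [mc [ec [_ H0 [-> ->] HG HR]]]]]]]] := Y_repl HY H.
  have [H1 Hs] := gcv_root H0 Hr.
  split=> [|_]; last by rewrite !size_plug; lia.
  eapply tyc; first exact: HR _ _ _ _ H1 (fun i _ => meq_refl _).
  exact: ceq_sym.
Qed.


Definition nstep l t t' := exists N r r', [/\ is_N N, t = plug N r, t' = plug N r' &
  ((l = YM /\ root_m r r') \/ (l = YeYN /\ root_e is_N r r'))].

Lemma N_is_Y N : is_N N -> is_Y N.
Proof. by move=> HN; exists Hole, N; split=> //; exact: A_hole. Qed.

Lemma nstep_ystep l t t' : nstep l t t' -> ystep l t t'.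
Proof.
move=> [N [r [r' [HN -> -> [[-> Hr]|[-> Hr]]]]]]; exists N, r, r'; split=> //; split=> //;
  split=> //; exact: N_is_Y.
Qed.

Lemma nlevel t : (exists N k, [/\ is_N N, depth N <= k & t = plug N (Var k)]) \/
  (exists l t', nstep l t t') \/ (exists S b, is_S S /\ t = plug S (Lam b)).
Proof.
elim: t => [k|b _|t1 IH1 t2 _|t1 IH1 u _].
- by left; exists Hole, k; split=> //; exact: N_hole.
- by right; right; exists Hole, b; split=> //; exact: S_hole.
- case: IH1 => [[N [k [HN Hk ->]]]|[[l [t1' [N [r [r' [HN -> _ Hr]]]]]]|[S [b [HS ->]]]]].
  + by left; exists (CAppL N t2), k; split=> //; exact: N_app.
  + right; left; exists l, (App (plug N r') t2), (CAppL N t2), r, r'; split=> //; exact: N_app.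
  + right; left; exists YM, (plug S (ES b (Defs.lift (depth S) t2))), Hole,
      (App (plug S (Lam b)) t2), (plug S (ES b (Defs.lift (depth S) t2))); split=> //.
    * exact: N_hole.
    * by left; split=> //; exists S, b, t2.
- case: IH1 => [[N [k [HN Hk ->]]]|[[l [t1' [N [r [r' [HN -> _ Hr]]]]]]|[S [b [HS ->]]]]].
  + case: (eqVneq k (depth N)) => [Ek|Hne].
    * subst k; right; left; exists YeYN, (ES (plug N (Defs.lift (depth N).+1 u)) u), Hole,
        (ES (plug N (Var (depth N))) u), (ES (plug N (Defs.lift (depth N).+1 u)) u); split=> //.
      -- exact: N_hole.
      -- by right; split=> //; exists N, u.
    * left; exists (CESL N u), k; split=> //; first exact: N_es.
      by rewrite /=; rewrite leq_eqVlt eq_sym (negbTE Hne) in Hk.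
  + right; left; exists l, (ES (plug N r') u), (CESL N u), r, r'; split=> //; exact: N_es.
  + by right; right; exists (CESL S u), b; split=> //; exact: S_es.
Qed.

Lemma ystep_CESL l t t' u : ystep l t t' -> ystep l (ES t u) (ES t' u).
Proof.
move=> [C [r [r' [-> [-> Hl]]]]]; exists (CESL C u), r, r'; do 2 split=> //.
case: l Hl => [[[A [N [HA [HN ->]]]] Hr]|[HA Hr]|[[A [N [HA [HN ->]]]] Hr]|[[A [N [HA [HN ->]]]] Hr]];
  (split=> //; [try (exists (CESL A u), N; split; [exact: A_es|split=> //]); try exact: A_es]).
Qed.

Lemma ystep_CESR l t t' a : answer a -> ystep l t t' -> ystep l (ES a t) (ES a t').
Proof.
move=> Ha [C [r [r' [-> [-> Hl]]]]]; exists (CESR a C), r, r'; do 2 split=> //.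
case: l Hl => [[[A [N [HA [HN ->]]]] Hr]|[HA Hr]|[[A [N [HA [HN ->]]]] Hr]|[[A [N [HA [HN ->]]]] Hr]];
  (split=> //; [try (exists (CESR a A), N; split; [exact: A_ans|split=> //]); try exact: A_ans]).
Qed.

Lemma ans_notvar a C k : answer a -> a <> plug C (Var k).
Proof.
move=> Ha; elim: Ha C => [b|a1 a2 _ IH1 _ IH2] [|C t|t C|C t|t C] //= [].
- by move=> E _; apply: (IH1 C).
- by move=> _ E; apply: (IH2 C).
Qed.

Lemma wn_lam b : w_normal (Lam b).
Proof.
move=> [t' [C [r [r' [_ [E [_ H]]]]]]].
case: C E => //= [] E; subst r.
by case: H => [[S [b0 [u [_ [E _]]]]]|[[C [u [_ [E _]]]]|[b0 [S [v [_ [_ [E _]]]]]]]].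
Qed.

Lemma ans_wn a u : answer a -> w_normal a -> w_normal u -> occurs 0 a -> w_normal (ES a u).
Proof.
move=> Ha Hwa Hwu Hocc [t' [C [r [r' [_ [E [_ H]]]]]]].
case: C E => [|C t|t C|C t|t C] //= E.
- subst r; case: H => [[S [b0 [u0 [_ [E _]]]]]|[[C [u0 [_ [E _]]]]|[b0 [S [v [_ [_ [E [Hn _]]]]]]]]] //.
  + case: E => E _; exact: (ans_notvar Ha E).
  + by case: E => E _; subst; rewrite Hocc in Hn.
- case: E => E _; apply: Hwa; exists (plug C r'), C, r, r'; do 3 split=> //.
- case: E => _ E; apply: Hwu; exists (plug C r'), C, r, r'; do 3 split=> //.
Qed.

Lemma ans_S a : answer a -> exists S b, is_S S /\ a = plug S (Lam b).
Proof.
elim => [b|a1 a2 _ [S [b [HS ->]]] _ _].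
- by exists Hole, b; split=> //; exact: S_hole.
- by exists (CESL S a2), b; split=> //; exact: S_es.
Qed.

Definition Cls t := (exists Y k, [/\ is_Y Y, depth Y <= k & t = plug Y (Var k)]) \/
  (exists l t', ystep l t t') \/ (answer t /\ w_normal t).

Lemma spine S : is_S S -> forall b, (forall u, tmsize u < tmsize (plug S (Lam b)) -> Cls u) ->
  Cls (plug S (Lam b)).
Proof.
elim => [|S1 u HS IH] b Hu /=.
- by right; right; split; [exact: ans_val | exact: wn_lam].
- have Hu' : forall u', tmsize u' < tmsize (plug S1 (Lam b)) -> Cls u'.
  { move=> u' Hs; apply: Hu => /=; lia. }
  case: (IH b Hu') => [[Y [k [HY Hk E]]]|[[l [t' Hs]]|[Ha Hwa]]].
  + rewrite E; case: (eqVneq k (depth Y)) => [Ek|Hne].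
    * subst k; right; left.
      exists YeAY, (ES (plug Y (Defs.lift (depth Y).+1 u)) u), Hole,
        (ES (plug Y (Var (depth Y))) u), (ES (plug Y (Defs.lift (depth Y).+1 u)) u).
      do 2 split=> //; split; first exact: A_hole.
      by exists Y, u.
    * left; exists (CESL Y u), k; split.
      -- move: HY => [A [N [HA [HN ->]]]]; exists (CESL A u), N; split; [exact: A_es|split=> //].
      -- by rewrite /=; rewrite leq_eqVlt eq_sym (negbTE Hne) in Hk.
      -- by [].
  + by right; left; exists l, (ES t' u); exact: ystep_CESL.
  + have : Cls u by apply: Hu => /=; lia.
    case=> [[Y [k [HY Hk ->]]]|[[l [t' Hs]]|[Hau Hwu]]].
    * left; exists (CESR (plug S1 (Lam b)) Y), k; split=> //.
      move: HY => [A [N [HA [HN ->]]]]; exists (CESR (plug S1 (Lam b)) A), N.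
      split; [exact: A_ans|split=> //].
    * by right; left; exists l, (ES (plug S1 (Lam b)) t'); exact: ystep_CESR.
    * case Hocc: (occurs 0 (plug S1 (Lam b))).
      -- right; right; split; [exact: ans_es | exact: ans_wn].
      -- right; left; have [S2 [b2 [HS2 Eu]]] := ans_S Hau.
         exists Ygcv, (plug S2 (ren (fun j => j.-1 + depth S2) (plug S1 (Lam b)))), Hole,
           (ES (plug S1 (Lam b)) u), (plug S2 (ren (fun j => j.-1 + depth S2) (plug S1 (Lam b)))).
         do 2 split=> //; split; first by exists Hole, Hole; split; [exact: A_hole|split=> //; exact: N_hole].
         exists (plug S1 (Lam b)), S2, (Lam b2); split=> //; split; first by exists b2.
         by rewrite Eu Hocc.
Qed.

Lemma progress n t : tmsize t < n -> Cls t.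
Proof.
elim: n t => [|n IH] t Hs; first by [].
case: (nlevel t) => [[N [k [HN Hk ->]]]|[[l [t' Hst]]|[S [b [HS E]]]]].
- by left; exists N, k; split=> //; exact: N_is_Y.
- by right; left; exists l, t'; exact: nstep_ystep.
- rewrite E; apply: spine => // u Hu; apply: IH; rewrite -E in Hu; lia.
Qed.

Lemma nonempty_meq A B C : meq A (B ++ C) -> B <> [::] -> A <> [::].
Proof. move=> /meq_size; rewrite size_cat => Hs HB EA; subst; case: B HB Hs => //. Qed.

Lemma var_ctx C : forall G m e k L, ty G m e (plug C (Var k)) L -> depth C <= k ->
  G (k - depth C) <> [::].
Proof.
elim: C => [|C IH t|t C IH|C IH t|t C IH] G m e k L /=.
- move=> /inv_var [_ _ H] _; rewrite subn0.
  have := H k; rewrite /single eqxx => /meq_size; by case: (G k).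
- move=> /inv_app [G1 [D [m1 [e1 [m2 [e2 [M [H1 H2 HG _ _]]]]]]]] Hk.
  apply: (nonempty_meq (HG _)); exact: IH H1 Hk.
- move=> /inv_app [G1 [D [m1 [e1 [m2 [e2 [M [H1 H2 HG _ _]]]]]]]] Hk.
  move: H2 => /inv_cons [D1 [D2 [m3 [e3 [m4 [e4 [ED H3 _ _ _]]]]]]]; subst D.
  have := HG (k - depth C); rewrite /cunion catA => HM.
  apply: (nonempty_meq HM); move: (IH _ _ _ _ _ H3 Hk).
  by case: (G1 _); case: (D1 _).
- move=> /inv_es [G1 [D [m1 [e1 [m2 [e2 [H1 H2 HG _ _]]]]]]] Hk.
  apply: (nonempty_meq (HG _)); rewrite /shc.
  have -> : (k - (depth C).+1).+1 = k - depth C by lia.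
  apply: IH H1 _; lia.
- move=> /inv_es [G1 [D [m1 [e1 [m2 [e2 [H1 H2 HG _ _]]]]]]] Hk.
  move: H2 => /inv_cons [D1 [D2 [m3 [e3 [m4 [e4 [ED H3 _ _ _]]]]]]]; subst D.
  have := HG (k - depth C); rewrite /cunion catA => HM.
  apply: (nonempty_meq HM); move: (IH _ _ _ _ _ H3 Hk).
  by case: (shc G1 _); case: (D1 _).
Qed.

Lemma main_aux mes : forall sz t m e, m + e < mes -> tmsize t < sz -> ty empty_ctx m e t TN ->
  exists n d, [/\ w_normal n, yseq t d n, count is_m_lab d = m & count is_e_lab d = e].
Proof.
elim: mes => [|mes IHmes] sz; first by [].
elim: sz => [|sz IHsz] t m e Hme Hsz Hty; first by [].
case: (progress (ltnSn (tmsize t))) => [[Y [k [HY Hk E]]]|[[l [t' Hst]]|[Ha Hw]]].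
- by subst t; exfalso; apply: (var_ctx Hty Hk).
- have [HSR Hsize] := SR Hst Hty.
  case: l Hst HSR Hsize => Hst HSR Hsize.
  + case: HSR => [m' [Em H']]; subst m.
    have [n [d [H1 H2 H3 H4]]] := IHmes (tmsize t').+1 t' m' e ltac:(lia) (ltnSn _) H'.
    exists n, (YM :: d); split; [exact: H1 | exact: ys_cons Hst H2 | by rewrite /= H3 | by rewrite /= H4].
  + case: HSR => [e' [Ee H']]; subst e.
    have [n [d [H1 H2 H3 H4]]] := IHmes (tmsize t').+1 t' m e' ltac:(lia) (ltnSn _) H'.
    exists n, (YeAY :: d); split; [exact: H1 | exact: ys_cons Hst H2 | by rewrite /= H3 | by rewrite /= H4].
  + case: HSR => [e' [Ee H']]; subst e.
    have [n [d [H1 H2 H3 H4]]] := IHmes (tmsize t').+1 t' m e' ltac:(lia) (ltnSn _) H'.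
    exists n, (YeYN :: d); split; [exact: H1 | exact: ys_cons Hst H2 | by rewrite /= H3 | by rewrite /= H4].
  + have Hs' := Hsize erefl.
    have [n [d [H1 H2 H3 H4]]] := IHsz t' m e Hme ltac:(lia) HSR.
    exists n, (Ygcv :: d); split; [exact: H1 | exact: ys_cons Hst H2 | by rewrite /= H3 | by rewrite /= H4].
- have [-> -> _] := ans_ty Ha Hty.
  by exists t, [::]; split=> //; exact: ys_nil.
Qed.

Unset Implicit Arguments.

Theorem theorem12p5 (t : term) (m e : nat) :
  closed_term t -> typing empty_ctx m e t TN ->
  exists (n : term) (d : seq ylab),
    w_normal n /\ yseq t d n /\ count is_m_lab d = m /\ count is_e_lab d = e.
Proof.
move=> _ /(proj1 embed) H.
have [n [d [H1 H2 H3 H4]]] := main_aux (ltnSn (m + e)) (ltnSn (tmsize t)) H.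
by exists n, d.
Qed.
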